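(* Let $\mathcal H$ be a cycle-reset SHS. Then $\mathcal T_{\mathcal H}$ is decisive with respect to every measurable set $B\in\Sigma_{\mathcal H}$.
   Context: Stochastic hybrid system (SHS) with $n$ variables: a finite set $L$ of locations; a finite set $E$ of edges $e=(\ell,a,\ell')$; for each $\ell$ an invariant $\mathrm{Inv}(\ell)\subseteq\mathbb R^n$ and a flow $\gamma_\ell:\mathbb R^n\times\mathbb R^+\to\mathbb R^n$; for each edge $e$ a guard $\mathcal G(e)\subseteq\mathbb R^n$ and a reset map $\mathbf v\mapsto\mathcal R_e(\mathbf v)\subseteq\mathbb R^n$. States $S_{\mathcal H}=L\times\mathbb R^n$ with $\sigma$-algebra $\Sigma_{\mathcal H}$ (product of discrete and Borel); $s+\tau=(\ell,\gamma_\ell(\mathbf v,\tau))$ for $s=(\ell,\mathbf v)$; $e$ enabled in $(\ell,\mathbf v)$ if $\mathbf v\in\mathcal G(e)$. $I(s)$ is the set of $\tau\ge0$ such that the trajectory stays in $\mathrm{Inv}(\ell)$ on $[0,\tau]$ and some edge is enabled at $s+\tau$ (assumed nonempty). Probabilistic data: delay distributions $\mu_s$ on $\mathbb R^+$ with $\mu_s(I(s))=1$; edge distributions $w_{s'}$ giving positive probability exactly to edges enabled in $s'$; reset distributions $\eta_e(\mathbf v)$ with $\eta_e(\mathbf v)(\mathcal R_e(\mathbf v))=1$. The STS $\mathcal T_{\mathcal H}$ has kernel $\kappa((\ell,\mathbf v),\{\ell'\}\times D)=\int\sum_{e=(\ell,a,\ell')}w_{s+\tau}(e)\,\eta_e(\gamma_\ell(\mathbf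 v,\tau))(D)\,d\mu_s(\tau)$. An edge $e$ is strongly reset if $\eta_e(\mathbf v)$ does not depend on $\mathbf v$; its common value is denoted $\eta^*_e$. $\mathcal H$ is cycle-reset if every cycle of the directed graph on $L$ with an arc $\ell\to\ell'$ whenever some edge $(\ell,a,\ell')\in E$ exists contains an arc $\ell\to\ell'$ such that all edges from $\ell$ to $\ell'$ are strongly reset. STS notions: $\mathbb P^{\mathcal T}_\mu$ induced probability on runs; $\widetilde B=\{s:\mathbb P_{\delta_s}(\mathbf F B)=0\}$; $\mathcal T$ is decisive w.r.t. $B$ if $\mathbb P^{\mathcal T}_\mu(\mathbf F B\vee\mathbf F\widetilde B)=1$ for every initial distribution $\mu$. *)

(* Defs.v *)
From HB Require Import structures.
From mathcomp Require Import all_boot all_order all_algebra.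
From mathcomp Require Import all_classical all_reals all_analysis.
Set Implicit Arguments. Unset Strict Implicit. Unset Printing Implicit Defensive.
Import Order.TTheory GRing.Theory Num.Theory.
Local Open Scope classical_set_scope.
Local Open Scope ring_scope.

Section sts.
Context {d : measure_display} {T : measurableType d} {R : realType}.
Variable k : R.-pker T ~> T.

(* reach_le k A n s = P_{delta_s}( F_{<= n} A ): probability of visiting A
   within the first n steps of the run started in s. *)
Fixpoint reach_le (A : set T) (m : nat) (s : T) : \bar R :=
  match m with
  | 0 => (\1_A s)%:E
  | m'.+1 => ((\1_A s)%:E + (\1_(~` A) s)%:E * \int[k s]_y reach_le A m' y)%E
  end.

Definition reach (A : set T) (s : T) : \bar R :=
  ereal_sup (range (fun m => reach_le A m s)).

Definition avoid_set (B : set T) : set T := [set s | reach B s = 0%E].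

(* decisiveness w.r.t. B: for every initial distribution mu,
   P_mu(F B \/ F B~) = P_mu(F (B u B~)) = 1 *)
Definition decisive (B : set T) : Prop :=
  forall mu : probability T R,
    (\int[mu]_s reach (B `|` avoid_set B) s = 1)%E.
End sts.

Section shs_graph.
Context {L : eqType} {Ed : finType} (src tgt : Ed -> L).

Definition loc_arc : rel L := fun l l' => [exists e, (src e == l) && (tgt e == l')].

(* every cycle l0 l1 ... lk = l0 (k >= 1) of the location graph contains an arc
   l_i -> l_{i+1} all of whose edges satisfy P (P = "is strongly reset") *)
Definition cycle_reset_for (P : Ed -> Prop) : Prop :=
  forall (x : L) (p : seq L), p != [::] -> path loc_arc x p -> last x p = x ->
    exists2 i, (i < size p)%N &
      forall e, src e = nth x (x :: p) i -> tgt e = nth x p i -> P e.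
End shs_graph.

(* Main.v *)
Require Import Defs.
From HB Require Import structures.
From mathcomp Require Import all_boot all_order all_algebra.
From mathcomp Require Import all_classical all_reals all_analysis.
From mathcomp Require Import measurable_realfun lra.
Import Order.TTheory GRing.Theory Num.Theory.
Local Open Scope classical_set_scope.
Local Open Scope ring_scope.
Local Open Scope ereal_scope.
Import HBNNSimple.

Lemma gen_le_integral d (T : measurableType d) (R : realType)
  (m : {measure set T -> \bar R}) (F G : T -> \bar R) :
  (forall x, 0 <= F x) -> (forall x, F x <= G x) ->
  \int[m]_x F x <= \int[m]_x G x.
Proof.
move=> F0 FG; have G0 x : 0 <= G x by exact: le_trans (FG x).
rewrite !ge0_integralTE//; apply: ereal_sup_le => _ [h hF <-].
exists h => //= x; exact: le_trans (hF x) (FG x).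
Qed.

Lemma gen_integralZl d (T : measurableType d) (R : realType)
  (m : {measure set T -> \bar R}) (F : T -> \bar R) (c : R) :
  (forall x, 0 <= F x) -> (0 <= c)%R ->
  c%:E * \int[m]_x F x <= \int[m]_x (c%:E * F x).
Proof.
move=> F0 c0; have cF0 x : 0 <= c%:E * F x by rewrite mule_ge0.
rewrite !ge0_integralTE//.
rewrite -ereal_supZl//; last first.
  apply/set0P; exists (sintegral m (@nnsfun0 _ T R)); exists nnsfun0 => //= x.
apply: ereal_sup_le => _ [_ [h hF <-] <-].
exists (scale_nnsfun h c0) => /=.
  by move=> x /=; rewrite EFinM lee_wpmul2l ?lee_fin//; exact: hF.
by rewrite sintegralrM.
Qed.

Lemma geo_small (R : realType) (Q e : R) : (0 <= Q < 1)%R -> (0 < e)%R ->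
  exists j, (Q ^+ j < e)%R.
Proof.
move=> /andP[Q0 Q1] e0.
have := @cvg_expr R Q; rewrite ger0_norm// => /(_ Q1).
move=> /cvgrPdist_lt/(_ e e0) [N _ HN].
exists N; have := HN N (leqnn N); rewrite /= sub0r normrN ger0_norm//.
exact: exprn_ge0.
Qed.

Section sts_lemmas.
Context {d : measure_display} {T : measurableType d} {R : realType}.
Variable k : R.-pker T ~> T.

Lemma int1 s : \int[k s]_y (1 : \bar R) = 1.
Proof. by rewrite integral_cst// mul1e prob_kernel. Qed.

Lemma reach_le_ge0 A m s : 0 <= reach_le k A m s.
Proof.
elim: m s => [|m IH] s /=; first by rewrite lee_fin.
by rewrite adde_ge0 ?mule_ge0 ?lee_fin ?integral_ge0.
Qed.

Lemma reach_le_le1 A m s : reach_le k A m s <= 1.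
Proof.
elim: m s => [|m IH] s /=; first by rewrite lee_fin indicE; case: (_ \in _).
rewrite !indicE; have [sA|sA] := boolP (s \in A).
  by rewrite in_setC sA /= mul0e adde0.
rewrite in_setC sA /= add0e mul1e -[leRHS](int1 s).
apply: gen_le_integral => // y; exact: reach_le_ge0.
Qed.

Lemma reach_le_in A m s : A s -> reach_le k A m s = 1.
Proof.
move=> sA; case: m => [|m] /=; rewrite !indicE ?in_setC mem_set//=.
by rewrite mul0e adde0.
Qed.

Lemma reach_le_out A m s : ~ A s -> reach_le k A m.+1 s = \int[k s]_y reach_le k A m y.
Proof.
by move=> sA /=; rewrite !indicE in_setC memNset//= add0e mul1e.
Qed.

Lemma measurable_reach_le A m : measurable A -> measurable_fun [set: T] (reach_le k A m : T -> \bar R).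
Proof.
move=> mA; elim: m => [|m IH] /=.
  by apply/measurable_realfun.measurable_EFinP; exact: measurable_realfun.measurable_indic.
apply: emeasurable_funD.
  by apply/measurable_realfun.measurable_EFinP; exact: measurable_realfun.measurable_indic.
apply: emeasurable_funM.
  apply/measurable_realfun.measurable_EFinP; apply: measurable_realfun.measurable_indic.
  exact: measurableC.
apply: (measurable_fun_integral_kernel (l := k)) => //.
- move=> U mU; exact: measurable_kernel.
- move=> y; exact: reach_le_ge0.
Qed.

Lemma reach_le_nd A m s : measurable A -> reach_le k A m s <= reach_le k A m.+1 s.
Proof.
move=> mA; elim: m s => [|m IH] s.
  have [sA|sA] := pselect (A s); first by rewrite !reach_le_in.
  rewrite /= !indicE in_setC memNset//= add0e mul1e; apply: integral_ge0 => y _; exact: (reach_le_ge0 A 0).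
have [sA|sA] := pselect (A s); first by rewrite !reach_le_in.
rewrite !reach_le_out//; apply: gen_le_integral => // y; exact: reach_le_ge0.
Qed.

Lemma reach_le_mono A m m' s : measurable A -> (m <= m')%N -> reach_le k A m s <= reach_le k A m' s.
Proof.
move=> mA /subnK <-; elim: (m' - m)%N => [|j IH]; first by rewrite add0n.
by rewrite addSn; apply: le_trans IH (reach_le_nd _ _ _ _).
Qed.

Lemma reach_le_subset A A' m s : A `<=` A' -> reach_le k A m s <= reach_le k A' m s.
Proof.
move=> AA'; elim: m s => [|m IH] s.
  rewrite /= lee_fin !indicE; have [sA|] := boolP (s \in A); last by case: (_ \in A').
  by rewrite mem_set //; apply: AA'; rewrite -inE.
have [sA|sA] := pselect (A s); first by rewrite !reach_le_in//; exact: AA'.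
have [sA'|sA'] := pselect (A' s); first by rewrite (@reach_le_in A' _ s sA') reach_le_le1.
rewrite !reach_le_out//; apply: gen_le_integral => // y; exact: reach_le_ge0.
Qed.

End sts_lemmas.

Section qsec.
Context {d : measure_display} {T : measurableType d} {R : realType}.
Variable k : R.-pker T ~> T.
Variable C : set T.
Hypothesis mC : measurable C.

Fixpoint qv (m : nat) (s : T) : \bar R :=
  match m with
  | 0 => (\1_(~` C) s)%:E
  | m'.+1 => (\1_(~` C) s)%:E * \int[k s]_y qv m' y
  end.

Lemma qv_ge0 m s : 0 <= qv m s.
Proof.
elim: m s => [|m IH] s /=; first by rewrite lee_fin.
by rewrite mule_ge0 ?lee_fin ?integral_ge0.
Qed.

Lemma qv_in m s : C s -> qv m s = 0.
Proof. by move=> Cs; case: m => [|m] /=; rewrite indicE in_setC mem_set//= ?mul0e. Qed.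

Lemma qv_out m s : ~ C s -> qv m.+1 s = \int[k s]_y qv m y.
Proof. by move=> Cs /=; rewrite indicE in_setC memNset//= mul1e. Qed.

Lemma measurable_qv m : measurable_fun [set: T] (qv m).
Proof.
elim: m => [|m IH] /=.
  apply/measurable_EFinP; apply: measurable_indic; exact: measurableC.
apply: emeasurable_funM.
  apply/measurable_EFinP; apply: measurable_indic; exact: measurableC.
apply: (measurable_fun_integral_kernel (l := k)) => //.
- move=> U mU; exact: measurable_kernel.
- move=> y; exact: qv_ge0.
Qed.

Lemma fq m s : reach_le k C m s + qv m s = 1.
Proof.
elim: m s => [|m IH] s.
  by rewrite /= !indicE in_setC; case: (_ \in C); rewrite /= ?adde0 ?add0e.
have [Cs|Cs] := pselect (C s); first by rewrite reach_le_in// qv_in// adde0.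
rewrite reach_le_out// qv_out// -ge0_integralD//.
- by rewrite (eq_integral (fun _ => 1)) ?int1// => y _; rewrite IH.
- move=> y _; exact: reach_le_ge0.
- exact: measurable_reach_le.
- move=> y _; exact: qv_ge0.
- exact: measurable_qv.
Qed.

Lemma qv_mult (Q : R) b : (0 <= Q)%R -> (forall y, qv b y <= Q%:E) ->
  forall a s, qv (a + b)%N s <= Q%:E * qv a s.
Proof.
move=> Q0 Hb; elim=> [|a IH] s.
  rewrite add0n; have [Cs|Cs] := pselect (C s); first by rewrite !qv_in// mule0.
  by rewrite /= indicE in_setC memNset//= mulr1n mule1; exact: Hb.
have [Cs|Cs] := pselect (C s); first by rewrite !qv_in// mule0.
rewrite addSn !qv_out// -ge0_integralZl//.
- apply: gen_le_integral => // y; exact: qv_ge0.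
- exact: measurable_qv.
- move=> y _; exact: qv_ge0.
Qed.

Lemma qv_iter (Q : R) b : (0 <= Q)%R -> (forall y, qv b y <= Q%:E) ->
  forall j s, qv (j * b)%N s <= (Q ^+ j)%:E.
Proof.
move=> Q0 Hb; elim=> [|j IH] s.
  by rewrite mul0n expr0 /= lee_fin indicE; case: (_ \in _).
rewrite mulSnr (le_trans (@qv_mult _ _ Q0 Hb _ _))// exprS EFinM.
by apply: lee_wpmul2l; rewrite ?lee_fin.
Qed.

Lemma reach_one b (delta : R) : (0 < delta)%R ->
  (forall y, delta%:E <= reach_le k C b y) -> forall s, reach k C s = 1.
Proof.
move=> d0 Hd s.
have reach_le1 : reach k C s <= 1.
  by apply: ge_ereal_sup => _ [m _ <-]; exact: reach_le_le1.
apply/eqP; rewrite eq_le reach_le1 /=.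
have d1 : (delta <= 1)%R by rewrite -lee_fin (le_trans (Hd s)) ?reach_le_le1.
have Q0 : (0 <= 1 - delta)%R by rewrite subr_ge0.
have Hb y : qv b y <= (1 - delta)%:E.
  have := fq b y; have := Hd y; have := reach_le_le1 k C b y.
  have := qv_ge0 b y.
  case: (reach_le k C b y) => [r| |]//; case: (qv b y) => [q| |]//.
  rewrite !lee_fin => q0 r1 dr; rewrite -EFinD => -[]; lra.
apply/lee_addgt0Pr => e e0.
have Q1 : (0 <= 1 - delta < 1)%R by rewrite Q0 /= ltrBlDr ltrDl.
have [j Hj] := @geo_small R _ _ Q1 e0.
have := @qv_iter _ _ Q0 Hb j s; have := fq (j * b)%N s.
have : reach_le k C (j * b)%N s <= reach k C s.
  by apply: ereal_sup_ubound; exists (j * b)%N.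
have := qv_ge0 (j * b)%N s.
case: (reach k C s) => [r| |]//; case: (qv (j * b)%N s) => [q| |]//;
  case: (reach_le k C (j * b)%N s) => [f| |]//.
- rewrite !lee_fin => q0 fr; rewrite -EFinD => -[] fq1 qQ.
  have : (q < e)%R by exact: le_lt_trans qQ Hj.
  lra.
- by move=> *; rewrite leey.
Qed.

End qsec.

Local Close Scope ereal_scope.


Section graph.
Context {L : eqType} {Ed : finType} (src tgt : Ed -> L) (SR : Ed -> Prop).
Hypothesis HC : cycle_reset_for src tgt SR.

Definition strong_arc (a b : L) := forall e, src e = a -> tgt e = b -> SR e.
Definition nsr : rel L := fun a b => ~~ `[< strong_arc a b >].

Lemma nsr_arc a b : nsr a b -> loc_arc src tgt a b.
Proof.
move=> /asboolPn H; apply/existsP; apply: contrapT => H2; apply: H => e ea eb.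
by exfalso; apply: H2; exists e; rewrite ea eb !eqxx.
Qed.

Lemma no_cycle0 z q : q != [::] -> path nsr z q -> last z q = z -> False.
Proof.
move=> q0 pq lq; have [i iq Hi] := @HC z q q0 (sub_path nsr_arc pq) lq.
move/(pathP z): pq => /(_ i iq) /asboolPn; apply; exact: Hi.
Qed.

Lemma no_ns_cycle x p y : path nsr x p -> y \in x :: p -> nsr (last x p) y -> False.
Proof.
move=> pp; rewrite inE => /orP[/eqP ->|yp] ny.
  by apply: (@no_cycle0 x (rcons p x)); rewrite ?rcons_path ?pp ?ny ?last_rcons//;
    case: p {pp ny}.
case/splitPr: yp pp ny => p1 p2.
rewrite cat_path last_cat /= => /andP[_ /andP[_ p2p]] ny.
apply: (@no_cycle0 y (rcons p2 y)); rewrite ?rcons_path ?p2p ?ny ?last_rcons//.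
by case: p2 {p2p ny}.
Qed.
End graph.


Lemma fin_nat (I : finType) (P : I -> nat -> Prop) :
  (forall i m m', (m <= m')%N -> P i m -> P i m') ->
  (forall i, exists m, P i m) -> exists m, forall i, P i m.
Proof.
move=> Pm Pe.
suff [m Hm] : exists m, forall i, i \in enum I -> P i m.
  by exists m => i; apply: Hm; rewrite mem_enum.
elim: (enum I) => [|i s [m Hm]]; first by exists 0%N.
have [mi Hi] := Pe i; exists (maxn m mi) => j; rewrite inE => /orP[/eqP ->|js].
  by apply: Pm Hi; rewrite leq_maxr.
by apply: Pm (Hm _ js); rewrite leq_maxl.
Qed.

Lemma fin_pos (R : realType) (I : finType) (P : I -> R -> Prop) :
  (forall i x y, 0 < y <= x -> P i x -> P i y) ->
  (forall i, exists2 x, 0 < x & P i x) -> exists2 y, 0 < y & forall i, P i y.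
Proof.
move=> Pm Pe.
suff [y y0 Hy] : exists2 y, 0 < y & forall i, i \in enum I -> P i y.
  by exists y => // i; apply: Hy; rewrite mem_enum.
elim: (enum I) => [|i s [y y0 Hy]]; first by exists 1.
have [x x0 Hi] := Pe i; exists (Num.min y x) => [|j]; first by rewrite lt_min y0.
rewrite inE => /orP[/eqP ->|js].
  by apply: Pm Hi; rewrite lt_min y0 x0 ge_min lexx orbT.
by apply: Pm (Hy _ js); rewrite lt_min y0 x0 ge_min lexx.
Qed.

Local Open Scope ereal_scope.


Lemma meas_ge d (T : measurableType d) (R : realType) (f : T -> \bar R) (a : \bar R) :
  measurable_fun [set: T] f -> measurable [set x | a <= f x].
Proof.
move=> mf; have := mf measurableT _ (emeasurable_itv `[a, +oo[).
rewrite setTI; congr measurable; apply/seteqP; split => x /=;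
  by rewrite in_itv /= andbT.
Qed.

Lemma meas_le d (T : measurableType d) (R : realType) (f : T -> \bar R) (a : \bar R) :
  measurable_fun [set: T] f -> measurable [set x | f x <= a].
Proof.
move=> mf; have := mf measurableT _ (emeasurable_itv `]-oo, a]).
rewrite setTI; congr measurable; apply/seteqP; split => x /=;
  by rewrite in_itv /=.
Qed.

Local Close Scope ereal_scope.
Local Open Scope ring_scope.

Theorem mainTheorem9 (R : realType) (n : nat)
  (dL : measure_display) (L : measurableType dL) (Ed : finType)
  (src tgt : Ed -> L)
  (Inv : L -> set (n.-tuple R))
  (gamma : L -> n.-tuple R -> R -> n.-tuple R)
  (Gd : Ed -> set (n.-tuple R))
  (Rst : Ed -> n.-tuple R -> set (n.-tuple R))
  (mu : L * n.-tuple R -> probability R R)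
  (w : L * n.-tuple R -> Ed -> R)
  (eta : Ed -> n.-tuple R -> probability (n.-tuple R) R)
  (kappa : R.-pker (L * n.-tuple R)%type ~> (L * n.-tuple R)%type) :
  (* L is a finite set of locations with the discrete sigma-algebra *)
  finite_set [set: L] ->
  (forall A : set L, measurable A) ->
  (* I(s) is nonempty and mu_s(I(s)) = 1 *)
  let I := fun s : L * n.-tuple R =>
    [set tau : R | 0 <= tau /\
       (forall t, 0 <= t <= tau -> Inv s.1 (gamma s.1 s.2 t)) /\
       exists e, src e = s.1 /\ Gd e (gamma s.1 s.2 tau)] in
  (forall s, I s !=set0) ->
  (forall s, exists2 A, measurable A /\ A `<=` I s & mu s A = 1%E) ->
  (* w_s is a distribution on edges, positive exactly on the edges enabled in s *)
  (forall s e, 0 <= w s e) ->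
  (forall s, \sum_(e : Ed) w s e = 1) ->
  (forall s e, 0 < w s e <-> (src e = s.1 /\ Gd e s.2)) ->
  (* eta_e(v)(R_e(v)) = 1 *)
  (forall e v, exists2 A, measurable A /\ A `<=` Rst e v & eta e v A = 1%E) ->
  (* kappa is the kernel of the STS T_H *)
  (forall (s : L * n.-tuple R) (l' : L) (D : set (n.-tuple R)), measurable D ->
     kappa s ([set l'] `*` D) =
     (\int[mu s]_tau
        (\sum_(e : Ed | (src e == s.1) && (tgt e == l'))
            ((w (s.1, gamma s.1 s.2 tau) e)%:E * eta e (gamma s.1 s.2 tau) D)))%E) ->
  (* H is cycle-reset *)
  cycle_reset_for src tgt
    (fun e => forall v v' (D : set (n.-tuple R)), measurable D ->
                eta e v D = eta e v' D) ->
  forall B : set (L * n.-tuple R), measurable B -> decisive kappa B.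
Proof.
move=> finL measL I _ _ w0 _ _ _ Hk HC B mB.
set SR := (fun e => forall v v' (D : set (n.-tuple R)), measurable D ->
                eta e v D = eta e v' D) in HC.
pose T := (L * n.-tuple R)%type.
have reach_ge0 A (s : T) : (0 <= reach kappa A s)%E.
  apply: le_trans (reach_le_ge0 kappa A 0 s) _.
  by apply: ereal_sup_ubound; exists 0%N.
have mreachB : measurable_fun [set: T] (reach kappa B).
  have := measurable_fun_esups (fun m => measurable_reach_le kappa B m mB) 0.
  congr measurable_fun; apply/funext => s; rewrite /esups /=.
  by congr ereal_sup; apply/seteqP; split => _ [k _ <-]; exists k.
pose C := B `|` avoid_set kappa B.
have mC : measurable C.
  apply: measurableU mB _.
  rewrite (_ : avoid_set kappa B = [set s | reach kappa B s <= 0]%E).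
    exact: meas_le.
  apply/seteqP; split => s /=; rewrite /avoid_set /=.
    by move=> ->.
  by move=> H; apply/eqP; rewrite eq_le H reach_ge0.
pose f m := reach_le kappa C m.
have f01 m s : (0 <= f m s <= 1)%E by rewrite reach_le_ge0 reach_le_le1.
have [sL HsL] := (finite_seqP _).1 finL.
pose uL := undup sL; pose N := size uL.
have inL l : l \in uL.
  by rewrite mem_undup; have : [set` sL] l by rewrite -HsL.
pose v0 : n.-tuple R := nseq_tuple n 0.
pose G2 M K l := [set v : n.-tuple R | (((K.+1)%:R)^-1%:E <= f M (l, v))%E].
have mG2 M K l : measurable (G2 M K l).
  apply: meas_ge; apply: (measurable_fun_pair2 l); exact: measurable_reach_le.
have G2mono M M' K K' l : (M <= M')%N -> (K <= K')%N -> G2 M K l `<=` G2 M' K' l.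
  move=> MM KK v; rewrite /G2 /f /= => H; apply: (le_trans _ (reach_le_mono kappa _ _ _ _ mC MM)).
  apply: le_trans H; rewrite lee_fin lef_pV2 ?posrE ?ltr0Sn// ler_nat ltnS//.
have pos_reach y : exists M, (0 < f M y)%E.
  have [B0|B0] := pselect (reach kappa B y = 0%E).
    by exists 0%N; rewrite /f reach_le_in ?lte01//; right.
  have : (0 < reach kappa B y)%E by rewrite lt0e reach_ge0 andbT; apply/eqP.
  case/ereal_sup_gt => _ [M _ <-] HM; exists M.
  apply: lt_le_trans HM _; apply: reach_le_subset; exact: subsetUl.
have cover l : [set: n.-tuple R] = \bigcup_M G2 M M l.
  apply/seteqP; split => v // _.
  have [M0 HM0] := pos_reach (l, v).
  have := f01 M0 (l, v); move: HM0.
  case E: (f M0 (l, v)) => [r| |] //; rewrite ?lte_fin ?lee_fin => r0 /andP[_ r1];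
    last by rewrite leye_eq in r1.
  pose K := Num.Def.archi_bound (r^-1).
  have HK : (K.+1%:R^-1 <= r).
    rewrite invf_ple ?posrE ?ltr0Sn//; apply: ltW.
    apply: lt_le_trans (archi_boundP _) _; first by rewrite invr_ge0 ltW.
    by rewrite ler_nat.
  exists (maxn M0 K) => //; apply: (G2mono M0 _ K); rewrite ?leq_maxl ?leq_maxr//.
  by rewrite /G2 /= E lee_fin.
pose G M l := G2 M M l.
have posG e : exists M, (0 < eta e v0 (G M (tgt e)))%E.
  apply: contrapT => /forallNP H0.
  have : (eta e v0).-negligible (\bigcup_M G M (tgt e)).
    apply: negligible_bigcup => M; exists (G M (tgt e)); split; [exact: mG2| |by move=> ?].
    apply/eqP; rewrite eq_le measure_ge0 andbT leNgt; apply/negP; exact: H0.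
  move=> -[A [mA A0 TA]].
  have TA' : [set: n.-tuple R] `<=` A by rewrite (cover (tgt e)).
  have : (eta e v0 [set: n.-tuple R] <= eta e v0 A)%E.
    by apply: le_measure; rewrite ?inE.
  by rewrite probability_setT A0 lee_fin ler10.
have [m Hm] : exists m, forall e, (0 < eta e v0 (G m (tgt e)))%E.
  apply: fin_nat => // e M M' MM H; apply: lt_le_trans H _.
  by apply: le_measure; rewrite ?inE; [exact: mG2|exact: mG2|exact: G2mono].
have [c0 c00 Hc0] : exists2 c, 0 < c & forall e, (c%:E <= eta e v0 (G m (tgt e)))%E.
  apply: fin_pos => [e x y /andP[_ yx] H|e]; first by apply: le_trans H; rewrite lee_fin.
  have := Hm e; have := probability_le1 (eta e v0) (mG2 m m (tgt e)).
  rewrite /G; case: (eta e v0 _) => [r| |]//; rewrite ?lte_fin ?lee_fin => _ r0.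
  by exists r.
pose c := Num.min c0 1.
have c0' : 0 < c by rewrite lt_min c00 ltr01.
have c1 : c <= 1 by rewrite ge_min lexx orbT.
have Hc e : (c%:E <= eta e v0 (G m (tgt e)))%E.
  by apply: le_trans (Hc0 e); rewrite lee_fin ge_min lexx.
pose eps := (m.+1%:R)^-1 : R.
have eps0 : 0 < eps by rewrite invr_gt0 ltr0Sn.
have eps1 : eps <= 1 by rewrite invf_le1 ?ltr0Sn// ler1n.
pose nsrL := nsr src tgt SR.
have measLT l (S : set (n.-tuple R)) : measurable S -> measurable ([set l] `*` S : set T).
  by move=> mS; apply: measurableX => //; exact: measL.
pose U (S : L -> set (n.-tuple R)) : set T := \bigcup_(l in [set` uL]) ([set l] `*` S l).
have kU (s : T) (S : L -> set (n.-tuple R)) : (forall l, measurable (S l)) ->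
    kappa s (U S) = (\sum_(l <- uL) kappa s ([set l] `*` S l))%R.
  move=> mS; rewrite /U measure_fin_bigcup.
  - by rewrite -fsbig_seq ?undup_uniq.
  - exact: finite_seq.
  - by move=> i j _ _ [[a b] [[/= ai _] [/= aj _]]]; rewrite -ai -aj.
  - by move=> l _; apply: measLT.
have UT : U (fun=> [set: n.-tuple R]) = [set: T].
  apply/seteqP; split => // -[l v] _; exists l; first exact: inL.
  by split.
have step s (beta : R) K : 0 <= beta <= eps -> (m <= K)%N ->
    (forall y : T, nsrL s.1 y.1 -> (beta%:E <= f K y)%E) ->
    ((beta * c)%:E <= \int[kappa s]_y f K y)%E.
  move=> /andP[b0 be] mK Hy.
  pose H := [set y : T | (beta%:E <= f K y)%E].
  have mH : measurable H by apply: meas_ge; exact: measurable_reach_le.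
  pose S l := if nsrL s.1 l then [set: n.-tuple R] else G m l.
  have mS l : measurable (S l) by rewrite /S; case: ifP => _ //; exact: mG2.
  have UH : U S `<=` H.
    move=> [l v] [l' _ [/= -> Sv]]; rewrite /H /=.
    move: Sv; rewrite /S; case: ifP => [nl _|_ Gv]; first exact: (Hy (l', v)).
    apply: le_trans (reach_le_mono kappa _ _ _ _ mC mK).
    by apply: le_trans Gv; rewrite lee_fin.
  have kUc : (c%:E <= kappa s (U S))%E.
    have k1 : kappa s [set: T] = 1%E := prob_kernel s.
    rewrite -UT kU // in k1; rewrite kU // -[c%:E]mule1 -k1 ge0_sume_distrr;
      last by move=> l _; exact: measure_ge0.
    apply: lee_sum => l _; rewrite /S; case: ifP => nl.
      rewrite -[leRHS]mul1e; apply: lee_wpmul2r; first exact: measure_ge0.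
      by rewrite lee_fin.
    rewrite /nsrL /nsr in nl; move/negbFE: nl => /asboolP Hs.
    rewrite !Hk //; last exact: mG2.
    eapply le_trans.
      apply: gen_integralZl; last exact: ltW.
      by move=> x; apply: sume_ge0 => e _; rewrite mule_ge0 ?lee_fin ?w0 ?measure_ge0.
    apply: gen_le_integral => x.
      by rewrite mule_ge0 ?lee_fin ?(ltW c0')//; apply: sume_ge0 => e _;
        rewrite mule_ge0 ?lee_fin ?w0 ?measure_ge0.
    rewrite ge0_sume_distrr; last by move=> e _; rewrite mule_ge0 ?lee_fin ?w0 ?measure_ge0.
    apply: lee_sum => e /andP[/eqP se /eqP te].
    rewrite probability_setT mule1 muleC; apply: lee_wpmul2l; first by rewrite lee_fin w0.
    rewrite (Hs e se te _ v0); last exact: mG2.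
    by rewrite -te; exact: Hc.
  have kH : (c%:E <= kappa s H)%E.
    apply: le_trans kUc _; apply: le_measure; rewrite ?inE; [|exact: mH|exact: UH].
    apply: fin_bigcup_measurable; first exact: finite_seq.
    by move=> l _; apply: measLT.
  apply: (@le_trans _ _ (\int[kappa s]_y (beta%:E * (\1_H y)%:E))%E).
    rewrite EFinM; eapply le_trans; last first.
      apply: (@gen_integralZl _ _ _ (kappa s) (fun y => (\1_H y)%:E) beta _ b0).
      by move=> y; rewrite lee_fin.
    by rewrite integral_indic // setIT; apply: lee_wpmul2l; rewrite ?lee_fin.
  apply: gen_le_integral => y; first by rewrite mule_ge0 ?lee_fin.
  rewrite indicE; have [yH|yH] := boolP (y \in H).
    by rewrite mulr1n mule1; rewrite inE in yH.
  by rewrite mulr0n mule0; exact: reach_le_ge0.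
have claim : forall j x p, path nsrL x p -> uniq (x :: p) -> (N < size (x :: p) + j)%N ->
    forall s : T, s.1 = last x p -> ((eps * c ^+ j)%:E <= f (j + m)%N s)%E.
  elim=> [|j IH] x p pp up Np s sl.
    exfalso; move: Np; rewrite addn0 ltnNge => /negP; apply.
    by apply: uniq_leq_size up _ => y _; exact: inL.
  have cj1 : c ^+ j <= 1 by exact: exprn_ile1 (ltW c0') c1.
  have [Cs|Cs] := pselect (C s).
    have -> : f (j.+1 + m)%N s = 1%E by exact: reach_le_in.
    rewrite lee_fin; apply: mulr_ile1; [exact: ltW|exact: exprn_ge0 (ltW c0')|exact: eps1|].
    exact: exprn_ile1 (ltW c0') c1.
  have -> : (f (j.+1 + m)%N s = \int[kappa s]_y f (j + m)%N y)%E.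
    by rewrite addSn; exact: reach_le_out.
  rewrite exprSr mulrA.
  apply: step.
  - apply/andP; split; first by rewrite mulr_ge0 ?exprn_ge0// ltW.
    by rewrite -[leRHS]mulr1; apply: ler_wpM2l => //; exact: ltW.
  - exact: leq_addl.
  - move=> [l v] /= nl.
    have lnot : l \notin x :: p.
      apply/negP => lin; apply: (@no_ns_cycle _ _ src tgt SR HC x p l pp lin).
      by rewrite -sl.
    apply: (IH x (rcons p l)).
    + by rewrite rcons_path pp -sl.
    + by rewrite -rcons_cons rcons_uniq lnot up.
    + by move: Np; rewrite /= size_rcons -addSnnS.
    + by rewrite last_rcons.
have Hf (s : T) : ((eps * c ^+ N)%:E <= f (N + m)%N s)%E.
  by apply: (claim N s.1 [::]) => //=; rewrite add1n.
have delta0 : 0 < eps * c ^+ N by rewrite mulr_gt0 ?exprn_gt0.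
have R1 := @reach_one _ _ _ kappa C mC _ _ delta0 Hf.
move=> mu0; rewrite (eq_integral (fun _ => 1%E)); last by move=> y _; rewrite R1.
by rewrite integral_cst // mul1e; exact: probability_setT.
Qed.
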